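(* Let $\Phi,\Psi$ be join doctrines such that $\Phi$ is a sound join doctrine dual to $\Psi^{\mathrm{op}}$ and $\omega\in\Phi$. Then $(\Phi,\Psi)$ is one of the following four pairs, and each of these four pairs does satisfy these conditions: (i) $\Phi=$ directed posets, $\Psi=$ posets with finite cofinality; (ii) $\Phi=$ posets that are empty or directed, $\Psi=$ nonempty posets with finite cofinality; (iii) $\Phi=$ nonempty posets, $\Psi=$ posets which are empty or have a greatest element; (iv) $\Phi=$ all posets, $\Psi=$ posets with a greatest element.
   Context: A join doctrine is a class $\Phi$ of posets such that: (1) the one-element poset is in $\Phi$; (2) if a poset $P$ is the union of a set $\mathcal{S}$ of subposets each in $\Phi$, and $\mathcal{S}$ ordered by inclusion is in $\Phi$, then $P\in\Phi$; (3) if $f:P\to Q$ is monotone with cofinal image and $P\in\Phi$ then $Q\in\Phi$; (4) if $P\subseteq Q$ is a cofinal subposet and $Q\in\Phi$ then $P\in\Phi$. For a poset $X$, $\mathcal{L}(X)$ denotes the set of lower subsets of $X$ ordered by inclusion, and $\Phi(X)\subseteq\mathcal{L}(X)$ the lower subsets which, as subposets, belong to $\Phi$. $\omega$ is the natural numbers with their usual order. For join doctrines $\Phi,\Psi$, ''$\Psi^{\mathrm{op}}$-meets commute with $\Phi$-joins in $2$'' means: for all posets $X,Y$, all $\phi\in\Phi(Y)$, $\psi\in\Psi(X)$ and all monotone $F:X^{\mathrm{op}}\times Y\to 2=\{0<1\}$, $\bigwedge_{x\in\psi}\bigvee_{y\in\phi}F(x,y)=\bigvee_{y\in\phi}\bigwedge_{x\in\psi}F(x,y)$.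 $\Phi$ is a sound join doctrine dual to $\Psi^{\mathrm{op}}$ if $\Psi^{\mathrm{op}}$-meets commute with $\Phi$-joins in $2$ and, for every poset $X$, the smallest subset of $\mathcal{L}(X)$ containing $\Psi(X)$ and closed under unions of subfamilies $\mathcal{S}\subseteq\mathcal{L}(X)$ with $\mathcal{S}$ (ordered by inclusion) in $\Phi$ is all of $\mathcal{L}(X)$. *)

(* Defs.v *)
(* Posets are represented by a carrier type together with a
   relation; a "class of posets" is a predicate on such pairs. *)
From Stdlib Require Import List.

Definition IsPoset (T : Type) (le : T -> T -> Prop) : Prop :=
  (forall x, le x x) /\
  (forall x y z, le x y -> le y z -> le x z) /\
  (forall x y, le x y -> le y x -> x = y).

Definition PClass := forall T : Type, (T -> T -> Prop) -> Prop.

Definition sub_le {T : Type} (le : T -> T -> Prop) (A : T -> Prop)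
  : {x : T | A x} -> {x : T | A x} -> Prop :=
  fun a b => le (proj1_sig a) (proj1_sig b).

Definition incl_le {T : Type} (S : (T -> Prop) -> Prop)
  : {A : T -> Prop | S A} -> {A : T -> Prop | S A} -> Prop :=
  fun A B => forall x, proj1_sig A x -> proj1_sig B x.

Definition bigunion {T : Type} (S : (T -> Prop) -> Prop) : T -> Prop :=
  fun x => exists A, S A /\ A x.

Definition monotone {P Q : Type} (leP : P -> P -> Prop) (leQ : Q -> Q -> Prop)
  (f : P -> Q) : Prop := forall x y, leP x y -> leQ (f x) (f y).

Definition cofinal_image {P Q : Type} (leQ : Q -> Q -> Prop) (f : P -> Q) : Prop :=
  forall q, exists p, leQ q (f p).

Definition cofinal_subset {T : Type} (le : T -> T -> Prop) (A : T -> Prop) : Prop :=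
  forall x, exists y, A y /\ le x y.

Definition JoinDoctrine (Phi : PClass) : Prop :=
  (forall T le, Phi T le -> IsPoset T le) /\
  Phi unit (fun _ _ => True) /\
  (forall (T : Type) (le : T -> T -> Prop), IsPoset T le ->
     forall S : (T -> Prop) -> Prop,
       (forall A, S A -> Phi {x : T | A x} (sub_le le A)) ->
       Phi {A : T -> Prop | S A} (incl_le S) ->
       (forall x, bigunion S x) ->
       Phi T le) /\
  (forall (P Q : Type) (leP : P -> P -> Prop) (leQ : Q -> Q -> Prop) (f : P -> Q),
     IsPoset P leP -> IsPoset Q leQ ->
     monotone leP leQ f -> cofinal_image leQ f ->
     Phi P leP -> Phi Q leQ) /\
  (forall (Q : Type) (leQ : Q -> Q -> Prop) (A : Q -> Prop),
     IsPoset Q leQ -> cofinal_subset leQ A ->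
     Phi Q leQ -> Phi {x : Q | A x} (sub_le leQ A)).

Definition lower {T : Type} (le : T -> T -> Prop) (A : T -> Prop) : Prop :=
  forall x y, le x y -> A y -> A x.

Definition InClassOf (Phi : PClass) {X : Type} (le : X -> X -> Prop) (A : X -> Prop) : Prop :=
  lower le A /\ Phi {x : X | A x} (sub_le le A).

(* Psi^op-meets commute with Phi-joins in 2 = {0 < 1} (bool, false < true). *)
Definition MeetsCommuteJoins (Phi Psi : PClass) : Prop :=
  forall (X Y : Type) (leX : X -> X -> Prop) (leY : Y -> Y -> Prop),
    IsPoset X leX -> IsPoset Y leY ->
    forall (phi : Y -> Prop) (psi : X -> Prop),
      InClassOf Phi leY phi -> InClassOf Psi leX psi ->
      forall F : X -> Y -> bool,
        (forall x x' y y', leX x' x -> leY y y' -> F x y = true -> F x' y' = true) ->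
        ((forall x, psi x -> exists y, phi y /\ F x y = true) <->
         (exists y, phi y /\ forall x, psi x -> F x y = true)).

(* L belongs to the smallest subset of L(X) containing Psi(X) and closed under
   unions of subfamilies S of L(X) with S (ordered by inclusion) in Phi. *)
Definition Generated (Phi Psi : PClass) {X : Type} (le : X -> X -> Prop) (L : X -> Prop) : Prop :=
  forall C : (X -> Prop) -> Prop,
    (forall A, InClassOf Psi le A -> C A) ->
    (forall S : (X -> Prop) -> Prop,
       (forall A, S A -> lower le A /\ C A) ->
       Phi {A : X -> Prop | S A} (incl_le S) ->
       C (bigunion S)) ->
    C L.

Definition SoundDual (Phi Psi : PClass) : Prop :=
  MeetsCommuteJoins Phi Psi /\
  (forall (X : Type) (le : X -> X -> Prop), IsPoset X le ->
     forall L, lower le L -> Generated Phi Psi le L).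

Definition Nonempty (T : Type) : Prop := exists x : T, True.
Definition Directed (T : Type) (le : T -> T -> Prop) : Prop :=
  Nonempty T /\ forall x y, exists z, le x z /\ le y z.
Definition FiniteCofinality (T : Type) (le : T -> T -> Prop) : Prop :=
  exists s : list T, forall x, exists y, In y s /\ le x y.
Definition HasGreatest (T : Type) (le : T -> T -> Prop) : Prop :=
  exists g, forall x, le x g.

Definition C_directed : PClass := fun T le => IsPoset T le /\ Directed T le.
Definition C_fincof : PClass := fun T le => IsPoset T le /\ FiniteCofinality T le.
Definition C_empty_or_directed : PClass :=
  fun T le => IsPoset T le /\ (~ Nonempty T \/ Directed T le).
Definition C_nonempty_fincof : PClass :=
  fun T le => IsPoset T le /\ Nonempty T /\ FiniteCofinality T le.
Definition C_nonempty : PClass := fun T le => IsPoset T le /\ Nonempty T.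
Definition C_empty_or_greatest : PClass :=
  fun T le => IsPoset T le /\ (~ Nonempty T \/ HasGreatest T le).
Definition C_all : PClass := fun T le => IsPoset T le.
Definition C_greatest : PClass := fun T le => IsPoset T le /\ HasGreatest T le.

Definition SameClass (Phi Phi' : PClass) : Prop := forall T le, Phi T le <-> Phi' T le.

(* Main.v *)
Require Import Defs.
From Stdlib Require Import List Classical ClassicalEpsilon ProofIrrelevance
  FunctionalExtensionality PropExtensionality Lia PeanoNat.
Import ListNotations.

Definition dec (P : Prop) : bool :=
  if excluded_middle_informative P then true else false.
Lemma dec_spec (P : Prop) : dec P = true <-> P.
Proof.
  unfold dec; destruct (excluded_middle_informative P) as [h|h]; split; intro H;
  auto; try discriminate; contradiction.
Qed.

Lemma sig_ext {T : Type} {A : T -> Prop} (a b : {x | A x}) :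
  proj1_sig a = proj1_sig b -> a = b.
Proof. destruct a, b; simpl; intros ->; f_equal; apply proof_irrelevance. Qed.

Lemma sub_poset {T : Type} (le : T -> T -> Prop) (A : T -> Prop) :
  IsPoset T le -> IsPoset {x | A x} (sub_le le A).
Proof.
  intros (r & t & a); unfold sub_le; split; [|split]; intros.
  - apply r.
  - eapply t; eauto.
  - apply sig_ext, a; auto.
Qed.

Lemma incl_poset {T : Type} (S : (T -> Prop) -> Prop) : IsPoset {A | S A} (incl_le S).
Proof.
  unfold incl_le; split; [|split]; intros; auto.
  apply sig_ext. apply functional_extensionality; intro z.
  apply propositional_extensionality; split; auto.
Qed.

Lemma eq_poset (T : Type) : IsPoset T (@eq T).
Proof. split; [|split]; intros; subst; auto. Qed.

Lemma nat_poset : IsPoset nat Peano.le.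
Proof. split; [|split]; intros; lia. Qed.

Lemma unit_poset : IsPoset unit (fun _ _ => True).
Proof. split; [|split]; auto. intros [] [] _ _; reflexivity. Qed.

Lemma pred_ext {T : Type} (A B : T -> Prop) : (forall x, A x <-> B x) -> A = B.
Proof. intro H; apply functional_extensionality; intro; apply propositional_extensionality; auto. Qed.

Lemma sameclass_eq (P Q : PClass) : SameClass P Q -> P = Q.
Proof.
  intro H. apply functional_extensionality_dep; intro T.
  apply functional_extensionality; intro le. apply propositional_extensionality; apply H.
Qed.

Lemma ne_union {T : Type} (S : (T -> Prop) -> Prop) :
  Nonempty {A | S A} -> (forall A, S A -> Nonempty {x | A x}) -> Nonempty T.
Proof. intros [[A HA] _] H. destruct (H A HA) as [[x _] _]. exists x; auto. Qed.

Lemma empty_union {T : Type} (S : (T -> Prop) -> Prop) :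
  ~ Nonempty {A | S A} -> (forall x, bigunion S x) -> ~ Nonempty T.
Proof. intros H Hc [x _]. destruct (Hc x) as [A [HA _]]. apply H. exists (exist _ A HA); auto. Qed.

Lemma ne_map {P Q : Type} (f : P -> Q) : Nonempty P -> Nonempty Q.
Proof. intros [x _]; exists (f x); auto. Qed.

Lemma empty_map {P Q : Type} (leQ : Q -> Q -> Prop) (f : P -> Q) :
  cofinal_image leQ f -> ~ Nonempty P -> ~ Nonempty Q.
Proof. intros Hc H [q _]. destruct (Hc q) as [p _]. apply H; exists p; auto. Qed.

Lemma ne_sub {Q : Type} (leQ : Q -> Q -> Prop) (A : Q -> Prop) :
  cofinal_subset leQ A -> Nonempty Q -> Nonempty {x | A x}.
Proof. intros Hc [q _]. destruct (Hc q) as [y [Hy _]]. exists (exist _ y Hy); auto. Qed.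

Lemma empty_sub {Q : Type} (A : Q -> Prop) : ~ Nonempty Q -> ~ Nonempty {x | A x}.
Proof. intros H [[x _] _]; apply H; exists x; auto. Qed.

Lemma dir_union_ub {T : Type} (le : T -> T -> Prop) (S : (T -> Prop) -> Prop) :
  (forall a b : {A | S A}, exists c, incl_le S a c /\ incl_le S b c) ->
  (forall A, S A -> ~ Nonempty {x | A x} \/ Directed {x | A x} (sub_le le A)) ->
  (forall x, bigunion S x) ->
  forall x y : T, exists z, le x z /\ le y z.
Proof.
  intros Hd Hm Hc x y.
  destruct (Hc x) as [A [HA Ax]]. destruct (Hc y) as [B [HB By]].
  destruct (Hd (exist _ A HA) (exist _ B HB)) as [[C HC] [HAC HBC]].
  unfold incl_le in *; simpl in *.
  destruct (Hm C HC) as [He | [_ Hdir]].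
  - exfalso; apply He. exists (exist _ x (HAC x Ax)); auto.
  - destruct (Hdir (exist _ x (HAC x Ax)) (exist _ y (HBC y By))) as [[z Hz] [H1 H2]].
    exists z; split; auto.
Qed.

Lemma dir_map {P Q : Type} (leP : P -> P -> Prop) (leQ : Q -> Q -> Prop) (f : P -> Q) :
  IsPoset Q leQ -> monotone leP leQ f -> cofinal_image leQ f ->
  Directed P leP -> Directed Q leQ.
Proof.
  intros (r & t & a) Hm Hc [Hn Hd]. split. { apply (ne_map f Hn). }
  intros x y. destruct (Hc x) as [p1 H1]. destruct (Hc y) as [p2 H2].
  destruct (Hd p1 p2) as [p3 [H13 H23]]. exists (f p3); split; eapply t; eauto.
Qed.

Lemma dir_sub {Q : Type} (leQ : Q -> Q -> Prop) (A : Q -> Prop) :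
  IsPoset Q leQ -> cofinal_subset leQ A -> Directed Q leQ -> Directed {x | A x} (sub_le leQ A).
Proof.
  intros (r & t & a) Hc [Hn Hd]. split. { apply (ne_sub leQ A Hc Hn). }
  intros [x Hx] [y Hy]. destruct (Hd x y) as [z [H1 H2]]. destruct (Hc z) as [w [Hw Hzw]].
  exists (exist _ w Hw); unfold sub_le; simpl; split; eapply t; eauto.
Qed.

Lemma fc_union {T : Type} (le : T -> T -> Prop) (S : (T -> Prop) -> Prop) :
  IsPoset T le ->
  FiniteCofinality {A | S A} (incl_le S) ->
  (forall A, S A -> FiniteCofinality {x | A x} (sub_le le A)) ->
  (forall x, bigunion S x) -> FiniteCofinality T le.
Proof.
  intros (r & t & a) [ls Hls] Hm Hc.
  assert (HL : forall ls : list {A | S A}, exists L : list T,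
    forall s, In s ls -> forall x, proj1_sig s x -> exists y, In y L /\ le x y).
  { induction ls0 as [|s ls' IH].
    - exists []; intros s [].
    - destruct IH as [L' HL']. destruct s as [A HA].
      destruct (Hm A HA) as [m Hm']. exists (map (@proj1_sig _ _) m ++ L').
      intros s [<-|Hs] x Hx.
      + destruct (Hm' (exist _ x Hx)) as [y [Hy Hxy]]. exists (proj1_sig y); split; auto.
        apply in_or_app; left; apply in_map; auto.
      + destruct (HL' s Hs x Hx) as [y [Hy Hxy]]. exists y; split; auto.
        apply in_or_app; right; auto. }
  destruct (HL ls) as [L HL']. exists L. intro x.
  destruct (Hc x) as [A [HA Ax]]. destruct (Hls (exist _ A HA)) as [s [Hs HAs]].
  apply (HL' s Hs x). apply HAs; auto.
Qed.

Lemma fc_map {P Q : Type} (leP : P -> P -> Prop) (leQ : Q -> Q -> Prop) (f : P -> Q) :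
  IsPoset Q leQ -> monotone leP leQ f -> cofinal_image leQ f ->
  FiniteCofinality P leP -> FiniteCofinality Q leQ.
Proof.
  intros (r & t & a) Hm Hc [l Hl]. exists (map f l). intro q.
  destruct (Hc q) as [p Hp]. destruct (Hl p) as [y [Hy Hpy]].
  exists (f y); split. { apply in_map; auto. } eapply t; eauto.
Qed.

Lemma fc_sub {Q : Type} (leQ : Q -> Q -> Prop) (A : Q -> Prop) :
  IsPoset Q leQ -> cofinal_subset leQ A ->
  FiniteCofinality Q leQ -> FiniteCofinality {x | A x} (sub_le leQ A).
Proof.
  intros (r & t & a) Hc [l Hl].
  assert (HL : forall l : list Q, exists L : list {x | A x},
    forall y, In y l -> exists w, In w L /\ leQ y (proj1_sig w)).
  { induction l0 as [|y l' IH].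
    - exists []; intros y [].
    - destruct IH as [L' HL']. destruct (Hc y) as [w [Hw Hyw]].
      exists (exist _ w Hw :: L'). intros z [<-|Hz].
      + exists (exist _ w Hw); split; simpl; auto.
      + destruct (HL' z Hz) as [w' [H1 H2]]. exists w'; split; simpl; auto. }
  destruct (HL l) as [L HL']. exists L. intros [x Hx].
  destruct (Hl x) as [y [Hy Hxy]]. destruct (HL' y Hy) as [w [Hw Hyw]].
  exists w; split; auto. unfold sub_le; simpl; eapply t; eauto.
Qed.

Lemma gr_map {P Q : Type} (leP : P -> P -> Prop) (leQ : Q -> Q -> Prop) (f : P -> Q) :
  IsPoset Q leQ -> monotone leP leQ f -> cofinal_image leQ f ->
  HasGreatest P leP -> HasGreatest Q leQ.
Proof.
  intros (r & t & a) Hm Hc [g Hg]. exists (f g). intro q.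
  destruct (Hc q) as [p Hp]. eapply t; eauto.
Qed.

Lemma gr_sub {Q : Type} (leQ : Q -> Q -> Prop) (A : Q -> Prop) :
  IsPoset Q leQ -> cofinal_subset leQ A ->
  HasGreatest Q leQ -> HasGreatest {x | A x} (sub_le leQ A).
Proof.
  intros (r & t & a) Hc [g Hg]. destruct (Hc g) as [w [Hw Hgw]].
  exists (exist _ w Hw). intros [x Hx]; unfold sub_le; simpl; eapply t; eauto.
Qed.

Lemma gr_union {T : Type} (le : T -> T -> Prop) (S : (T -> Prop) -> Prop) :
  HasGreatest {A | S A} (incl_le S) ->
  (forall A, S A -> ~ Nonempty {x | A x} \/ HasGreatest {x | A x} (sub_le le A)) ->
  (forall x, bigunion S x) -> ~ Nonempty T \/ HasGreatest T le.
Proof.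
  intros [[G HG] Hg] Hm Hc. unfold incl_le in Hg; simpl in Hg.
  destruct (Hm G HG) as [He | [[g Gg] Hgg]].
  - left. intros [x _]. destruct (Hc x) as [A [HA Ax]]. apply He.
    exists (exist _ x (Hg (exist _ A HA) x Ax)); auto.
  - right. exists g. intro x. destruct (Hc x) as [A [HA Ax]].
    exact (Hgg (exist _ x (Hg (exist _ A HA) x Ax))).
Qed.

Lemma unit_dir : Directed unit (fun _ _ => True).
Proof. split. exists tt; auto. intros; exists tt; auto. Qed.
Lemma unit_fc : FiniteCofinality unit (fun _ _ => True).
Proof. exists [tt]; intros; exists tt; simpl; auto. Qed.
Lemma unit_gr : HasGreatest unit (fun _ _ => True).
Proof. exists tt; auto. Qed.
Lemma unit_ne : Nonempty unit.
Proof. exists tt; auto. Qed.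

Lemma jd_directed : JoinDoctrine C_directed.
Proof.
  unfold C_directed; split; [|split; [|split; [|split]]].
  - tauto.
  - split; [apply unit_poset|apply unit_dir].
  - intros T le HT S Hm [_ [HSn HSd]] Hc. split; auto. split.
    + apply (ne_union S HSn). intros A HA; apply (Hm A HA).
    + apply (dir_union_ub le S HSd); auto. intros A HA; right; apply Hm; auto.
  - intros P Q leP leQ f HP HQ Hm Hc [_ Hd]. split; auto. eapply dir_map; eauto.
  - intros Q leQ A HQ Hc [_ Hd]. split. apply sub_poset; auto. apply dir_sub; auto.
Qed.

Lemma jd_fincof : JoinDoctrine C_fincof.
Proof.
  unfold C_fincof; split; [|split; [|split; [|split]]].
  - tauto.
  - split; [apply unit_poset|apply unit_fc].
  - intros T le HT S Hm [_ HS] Hc. split; auto. apply (fc_union le S); auto.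
    intros A HA; apply Hm; auto.
  - intros P Q leP leQ f HP HQ Hm Hc [_ Hd]. split; auto. eapply fc_map; eauto.
  - intros Q leQ A HQ Hc [_ Hd]. split. apply sub_poset; auto. apply fc_sub; auto.
Qed.

Lemma jd_ed : JoinDoctrine C_empty_or_directed.
Proof.
  unfold C_empty_or_directed; split; [|split; [|split; [|split]]].
  - tauto.
  - split; [apply unit_poset|right; apply unit_dir].
  - intros T le HT S Hm [_ HS] Hc. split; auto.
    destruct HS as [HS | [_ HSd]].
    + left. apply (empty_union S HS Hc).
    + destruct (classic (Nonempty T)) as [Hn|Hn]; [right|left; auto].
      split; auto. apply (dir_union_ub le S HSd); auto. intros A HA; apply Hm; auto.
  - intros P Q leP leQ f HP HQ Hm Hc [_ Hd]. split; auto.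
    destruct Hd as [He|Hd]; [left; eapply empty_map; eauto | right; eapply dir_map; eauto].
  - intros Q leQ A HQ Hc [_ Hd]. split. apply sub_poset; auto.
    destruct Hd as [He|Hd]; [left; apply empty_sub; auto | right; apply dir_sub; auto].
Qed.

Lemma jd_nfc : JoinDoctrine C_nonempty_fincof.
Proof.
  unfold C_nonempty_fincof; split; [|split; [|split; [|split]]].
  - tauto.
  - split; [apply unit_poset|split; [apply unit_ne|apply unit_fc]].
  - intros T le HT S Hm [_ [HSn HS]] Hc. split; auto. split.
    + apply (ne_union S HSn). intros A HA; apply (Hm A HA).
    + apply (fc_union le S); auto. intros A HA; apply Hm; auto.
  - intros P Q leP leQ f HP HQ Hm Hc [_ [Hn Hd]]. split; auto. split.
    apply (ne_map f Hn). eapply fc_map; eauto.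
  - intros Q leQ A HQ Hc [_ [Hn Hd]]. split. apply sub_poset; auto. split.
    apply (ne_sub leQ A Hc Hn). apply fc_sub; auto.
Qed.

Lemma jd_ne : JoinDoctrine C_nonempty.
Proof.
  unfold C_nonempty; split; [|split; [|split; [|split]]].
  - tauto.
  - split; [apply unit_poset|apply unit_ne].
  - intros T le HT S Hm [_ HSn] Hc. split; auto.
    apply (ne_union S HSn). intros A HA; apply (Hm A HA).
  - intros P Q leP leQ f HP HQ Hm Hc [_ Hn]. split; auto. apply (ne_map f Hn).
  - intros Q leQ A HQ Hc [_ Hn]. split. apply sub_poset; auto. apply (ne_sub leQ A Hc Hn).
Qed.

Lemma jd_eg : JoinDoctrine C_empty_or_greatest.
Proof.
  unfold C_empty_or_greatest; split; [|split; [|split; [|split]]].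
  - tauto.
  - split; [apply unit_poset|right; apply unit_gr].
  - intros T le HT S Hm [_ HS] Hc. split; auto.
    destruct HS as [HS | HSg].
    + left. apply (empty_union S HS Hc).
    + apply (gr_union le S HSg); auto. intros A HA; apply Hm; auto.
  - intros P Q leP leQ f HP HQ Hm Hc [_ Hd]. split; auto.
    destruct Hd as [He|Hd]; [left; eapply empty_map; eauto | right; eapply gr_map; eauto].
  - intros Q leQ A HQ Hc [_ Hd]. split. apply sub_poset; auto.
    destruct Hd as [He|Hd]; [left; apply empty_sub; auto | right; apply gr_sub; auto].
Qed.

Lemma jd_all : JoinDoctrine C_all.
Proof.
  unfold C_all; split; [|split; [|split; [|split]]]; auto.
  - apply unit_poset.
  - intros; apply sub_poset; auto.
Qed.

Lemma jd_greatest_class : JoinDoctrine C_greatest.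
Proof.
  unfold C_greatest; split; [|split; [|split; [|split]]].
  - tauto.
  - split; [apply unit_poset|apply unit_gr].
  - intros T le HT S Hm [_ HSg] Hc. split; auto.
    destruct (gr_union le S HSg) as [He|Hg]; auto.
    + intros A HA; right; apply Hm; auto.
    + exfalso. destruct HSg as [[G HG] _]. destruct (Hm G HG) as [_ [[x _] _]].
      apply He; exists x; auto.
  - intros P Q leP leQ f HP HQ Hm Hc [_ Hd]. split; auto. eapply gr_map; eauto.
  - intros Q leQ A HQ Hc [_ Hd]. split. apply sub_poset; auto. apply gr_sub; auto.
Qed.

Definition dl {X : Type} (le : X -> X -> Prop) (l : list X) : X -> Prop :=
  fun x => exists y, In y l /\ le x y.

Lemma dl_lower {X : Type} (le : X -> X -> Prop) l : IsPoset X le -> lower le (dl le l).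
Proof. intros (r & t & a) x y Hxy [z [Hz Hyz]]. exists z; split; eauto. Qed.

Lemma lift_list {X : Type} (P : X -> Prop) (l : list X) :
  (forall y, In y l -> P y) -> exists L : list {x | P x}, forall y (H : In y l),
    exists p, In (exist _ y p) L.
Proof.
  induction l as [|a l IH]; intro H.
  - exists []; intros y [].
  - destruct IH as [L HL]. { intros; apply H; simpl; auto. }
    exists (exist _ a (H a (or_introl eq_refl)) :: L). intros y [<-|Hy].
    + eexists; left; reflexivity.
    + destruct (HL y Hy) as [p Hp]. exists p; right; auto.
Qed.

Lemma dl_fc {X : Type} (le : X -> X -> Prop) l : IsPoset X le ->
  FiniteCofinality {x | dl le l x} (sub_le le (dl le l)).
Proof.
  intros (r & t & a). destruct (lift_list (dl le l) l) as [L HL].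
  { intros y Hy; exists y; split; auto. }
  exists L. intros [x [y [Hy Hxy]]]. destruct (HL y Hy) as [p Hp].
  exists (exist _ y p); split; auto.
Qed.

Definition Sb {X : Type} (le : X -> X -> Prop) (L : X -> Prop) (base : list X) :
  (X -> Prop) -> Prop :=
  fun A => exists l, (forall y, In y l -> L y) /\ A = dl le (base ++ l).

Lemma Sb_dir {X : Type} (le : X -> X -> Prop) L base :
  Directed {A | Sb le L base A} (incl_le (Sb le L base)).
Proof.
  split.
  - assert (H0 : Sb le L base (dl le (base ++ []))).
    { exists []; split; auto. intros y []. }
    exists (exist _ _ H0); auto.
  - intros [A [l1 [H1 ->]]] [B [l2 [H2 ->]]].
    assert (HS : Sb le L base (dl le (base ++ l1 ++ l2))).
    { exists (l1 ++ l2); split; auto. intros y Hy; apply in_app_or in Hy; destruct Hy; auto. }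
    exists (exist _ _ HS); unfold incl_le; simpl; split;
    intros x [y [Hy Hxy]]; exists y; split; auto; apply in_app_or in Hy;
    apply in_or_app; destruct Hy; auto; right; apply in_or_app; auto.
Qed.

Lemma Sb_union {X : Type} (le : X -> X -> Prop) L base : IsPoset X le -> lower le L ->
  (forall y, In y base -> L y) -> bigunion (Sb le L base) = L.
Proof.
  intros HP HL Hb. apply pred_ext; intro x; split.
  - intros [A [[l [Hl ->]] [y [Hy Hxy]]]]. apply (HL x y Hxy).
    apply in_app_or in Hy; destruct Hy; auto.
  - intro Hx. exists (dl le (base ++ [x])). split.
    + exists [x]; split; auto. intros y [<-|[]]; auto.
    + exists x; split. apply in_or_app; right; left; auto. apply HP.
Qed.

Definition Sp {X : Type} (le : X -> X -> Prop) (L : X -> Prop) : (X -> Prop) -> Prop :=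
  fun A => exists x, L x /\ A = dl le [x].

Lemma Sp_union {X : Type} (le : X -> X -> Prop) L : IsPoset X le -> lower le L ->
  bigunion (Sp le L) = L.
Proof.
  intros HP HL. apply pred_ext; intro x; split.
  - intros [A [[z [Hz ->]] [y [[<-|[]] Hxy]]]]. apply (HL x z Hxy Hz).
  - intro Hx. exists (dl le [x]). split. exists x; auto. exists x; split; simpl; auto. apply HP.
Qed.

Lemma dl1_gr {X : Type} (le : X -> X -> Prop) x : IsPoset X le ->
  HasGreatest {z | dl le [x] z} (sub_le le (dl le [x])).
Proof.
  intro HP. assert (Hx : dl le [x] x) by (exists x; split; simpl; auto; apply HP).
  exists (exist _ x Hx). intros [z [y [[<-|[]] Hzy]]]; unfold sub_le; simpl; auto.
Qed.

Lemma mc_dir_fc {X Y : Type} (leX : X -> X -> Prop) (leY : Y -> Y -> Prop) phi psi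
  (F : X -> Y -> bool) : IsPoset X leX -> IsPoset Y leY ->
  Directed {y | phi y} (sub_le leY phi) ->
  FiniteCofinality {x | psi x} (sub_le leX psi) ->
  (forall x x' y y', leX x' x -> leY y y' -> F x y = true -> F x' y' = true) ->
  (forall x, psi x -> exists y, phi y /\ F x y = true) ->
  (exists y, phi y /\ forall x, psi x -> F x y = true).
Proof.
  intros HX HY [Hn Hd] [ls Hls] Hm H.
  assert (HL : forall ls : list {x | psi x}, exists y, phi y /\
     forall s, In s ls -> F (proj1_sig s) y = true).
  { induction ls0 as [|s ls' IH].
    - destruct Hn as [[y Hy] _]. exists y; split; [auto|intros s []].
    - destruct IH as [y2 [Hy2 H2]]. destruct s as [x Hx].
      destruct (H x Hx) as [y1 [Hy1 H1]].
      destruct (Hd (exist _ y1 Hy1) (exist _ y2 Hy2)) as [[z Hz] [Hz1 Hz2]].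
      unfold sub_le in *; simpl in *.
      exists z; split; auto. intros s [<-|Hs]; simpl.
      + eapply Hm; [apply HX| exact Hz1| exact H1].
      + eapply Hm; [apply HX| exact Hz2| apply H2; auto]. }
  destruct (HL ls) as [y [Hy Hy']]. exists y; split; auto.
  intros x Hx. destruct (Hls (exist _ x Hx)) as [s [Hs Hxs]].
  eapply Hm; [exact Hxs| apply HY| apply Hy'; auto].
Qed.

Lemma mc_gr {X Y : Type} (leX : X -> X -> Prop) (leY : Y -> Y -> Prop) phi psi
  (F : X -> Y -> bool) : IsPoset Y leY ->
  HasGreatest {x | psi x} (sub_le leX psi) ->
  (forall x x' y y', leX x' x -> leY y y' -> F x y = true -> F x' y' = true) ->
  (forall x, psi x -> exists y, phi y /\ F x y = true) ->
  (exists y, phi y /\ forall x, psi x -> F x y = true).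
Proof.
  intros HY [[g Hg] Hgg] Hm H. destruct (H g Hg) as [y [Hy Hgy]].
  exists y; split; auto. intros x Hx.
  eapply Hm; [exact (Hgg (exist _ x Hx))| apply HY| exact Hgy].
Qed.

Lemma mc_easy {X Y : Type} phi psi (F : X -> Y -> bool) :
  (exists y, phi y /\ forall x, psi x -> F x y = true) ->
  (forall x, psi x -> exists y, phi y /\ F x y = true).
Proof. intros [y [Hy H]] x Hx; exists y; auto. Qed.

Lemma sd_i : SoundDual C_directed C_fincof.
Proof.
  split.
  - intros X Y leX leY HX HY phi psi [_ [_ Hphi]] [_ [_ Hpsi]] F Hm; split.
    + apply (mc_dir_fc leX leY); auto.
    + apply mc_easy.
  - intros X le HX L HL C H1 H2. rewrite <- (Sb_union le L [] HX HL) by (intros y []).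
    apply H2.
    + intros A [l [Hl ->]]. split. apply dl_lower; auto. apply H1.
      split. apply dl_lower; auto. split. apply sub_poset; auto. apply dl_fc; auto.
    + split. apply incl_poset. apply Sb_dir.
Qed.

Lemma sd_ii : SoundDual C_empty_or_directed C_nonempty_fincof.
Proof.
  split.
  - intros X Y leX leY HX HY phi psi [_ [_ Hphi]] [_ [_ [Hn Hpsi]]] F Hm; split.
    + destruct Hphi as [He|Hd].
      * intro H. destruct Hn as [[x Hx] _]. destruct (H x Hx) as [y [Hy _]].
        exfalso; apply He; exists (exist _ y Hy); auto.
      * apply (mc_dir_fc leX leY); auto.
    + apply mc_easy.
  - intros X le HX L HL C H1 H2. destruct (classic (exists x, L x)) as [[x0 Hx0]|Hne].
    + rewrite <- (Sb_union le L [x0] HX HL) by (intros y [<-|[]]; auto).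
      apply H2.
      * intros A [l [Hl ->]]. split. apply dl_lower; auto. apply H1.
        split. apply dl_lower; auto. split. apply sub_poset; auto. split.
        -- exists (exist _ x0 (ex_intro _ x0 (conj (or_introl eq_refl) (proj1 HX x0)) : dl le ([x0] ++ l) x0)); auto.
        -- apply dl_fc; auto.
      * split. apply incl_poset. right; apply Sb_dir.
    + assert (E : bigunion (fun _ : X -> Prop => False) = L).
      { apply pred_ext; intro x; split. intros [A [[] _]]. intro; exfalso; eauto. }
      rewrite <- E. apply H2. intros A []. split. apply incl_poset.
      left. intros [[A []] _].
Qed.

Lemma sd_iii : SoundDual C_nonempty C_empty_or_greatest.
Proof.
  split.
  - intros X Y leX leY HX HY phi psi [_ [_ Hphi]] [_ [_ Hpsi]] F Hm; split.
    + destruct Hpsi as [He|Hg].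
      * intros _. destruct Hphi as [[y Hy] _]. exists y; split.
        exact Hy. intros x Hx; exfalso; apply He; exists (exist _ x Hx); auto.
      * apply (mc_gr leX leY); auto.
    + apply mc_easy.
  - intros X le HX L HL C H1 H2. destruct (classic (exists x, L x)) as [[x0 Hx0]|Hne].
    + rewrite <- (Sp_union le L HX HL). apply H2.
      * intros A [x [Hx ->]]. split. apply dl_lower; auto. apply H1.
        split. apply dl_lower; auto. split. apply sub_poset; auto. right; apply dl1_gr; auto.
      * split. apply incl_poset.
        assert (H0 : Sp le L (dl le [x0])) by (exists x0; auto).
        exists (exist _ _ H0); auto.
    + apply H1. split; auto. split. apply sub_poset; auto. left.
      intros [[x Hx] _]; eauto.
Qed.

Lemma sd_iv : SoundDual C_all C_greatest.
Proof.
  split.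
  - intros X Y leX leY HX HY phi psi [_ Hphi] [_ [_ Hpsi]] F Hm; split.
    + apply (mc_gr leX leY); auto.
    + apply mc_easy.
  - intros X le HX L HL C H1 H2.
    rewrite <- (Sp_union le L HX HL). apply H2.
    * intros A [x [Hx ->]]. split. apply dl_lower; auto. apply H1.
      split. apply dl_lower; auto. split. apply sub_poset; auto. apply dl1_gr; auto.
    * apply incl_poset.
Qed.

Lemma nat_dir : Directed nat Peano.le.
Proof. split. exists 0; auto. intros x y; exists (x + y); lia. Qed.

Lemma jd_pos (Phi : PClass) : JoinDoctrine Phi -> forall T le, Phi T le -> IsPoset T le.
Proof. intros J; apply J. Qed.

Lemma jd_map (Phi : PClass) : JoinDoctrine Phi ->
  forall (P Q : Type) (leP : P -> P -> Prop) (leQ : Q -> Q -> Prop) (f : P -> Q),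
  IsPoset Q leQ -> monotone leP leQ f -> cofinal_image leQ f -> Phi P leP -> Phi Q leQ.
Proof.
  intros J P Q leP leQ f HQ Hm Hc HP. destruct J as (J0 & _ & _ & J3 & _).
  exact (J3 P Q leP leQ f (J0 _ _ HP) HQ Hm Hc HP).
Qed.

Lemma jd_gr (Phi : PClass) : JoinDoctrine Phi ->
  forall Q (le : Q -> Q -> Prop), IsPoset Q le -> HasGreatest Q le -> Phi Q le.
Proof.
  intros J Q le HQ [g Hg]. apply (jd_map Phi J unit Q (fun _ _ => True) le (fun _ => g)); auto.
  - intros x y _; apply HQ.
  - intro q; exists tt; auto.
  - apply J.
Qed.

Lemma jd_full (Phi : PClass) : JoinDoctrine Phi ->
  forall T (le : T -> T -> Prop), Phi T le -> Phi {x : T | True} (sub_le le (fun _ => True)).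
Proof.
  intros J T le H. destruct J as (J0 & _ & _ & _ & J4). apply J4; auto.
  intro x; exists x; split; auto. apply (J0 _ _ H).
Qed.

Lemma jd_unfull (Phi : PClass) : JoinDoctrine Phi ->
  forall T (le : T -> T -> Prop) (A : T -> Prop), IsPoset T le -> (forall x, A x) ->
  Phi {x | A x} (sub_le le A) -> Phi T le.
Proof.
  intros J T le A HT HA H. apply (jd_map Phi J _ _ (sub_le le A) le (@proj1_sig T A)); auto.
  - intros x y Hxy; exact Hxy.
  - intro q; exists (exist _ q (HA q)); apply HT.
Qed.

Lemma jd_empty (Phi : PClass) : JoinDoctrine Phi ->
  forall A (leA : A -> A -> Prop) B (leB : B -> B -> Prop), Phi A leA -> ~ Nonempty A ->
  IsPoset B leB -> ~ Nonempty B -> Phi B leB.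
Proof.
  intros J A leA B leB H HA HB HB'.
  apply (jd_map Phi J A B leA leB (fun a => False_rect _ (HA (ex_intro _ a I)))); auto.
  - intros x; exfalso; apply HA; exists x; auto.
  - intros q; exfalso; apply HB'; exists q; auto.
Qed.

Lemma mc_full (Phi Psi : PClass) : JoinDoctrine Phi -> JoinDoctrine Psi ->
  MeetsCommuteJoins Phi Psi ->
  forall X Y (leX : X -> X -> Prop) (leY : Y -> Y -> Prop), Psi X leX -> Phi Y leY ->
  forall F : X -> Y -> bool,
  (forall x x' y y', leX x' x -> leY y y' -> F x y = true -> F x' y' = true) ->
  (forall x, exists y, F x y = true) -> exists y, forall x, F x y = true.
Proof.
  intros JF JS M X Y leX leY HX HY F Hm H.
  destruct (M X Y leX leY (jd_pos _ JS _ _ HX) (jd_pos _ JF _ _ HY) (fun _ => True) (fun _ => True))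
    with (F := F) as [M1 _]; auto.
  - split. intros x y _ _; auto. apply jd_full; auto.
  - split. intros x y _ _; auto. apply jd_full; auto.
  - destruct M1 as [y [_ Hy]]. intros x _. destruct (H x) as [y Hy]; eauto.
    exists y; auto.
Qed.

Lemma empty_not_both (Phi Psi : PClass) : JoinDoctrine Phi -> JoinDoctrine Psi ->
  MeetsCommuteJoins Phi Psi -> Phi Empty_set eq -> Psi Empty_set eq -> False.
Proof.
  intros JF JS M H1 H2.
  destruct (mc_full Phi Psi JF JS M Empty_set Empty_set eq eq H2 H1 (fun _ _ => true)) as [y _];
    auto.
  - intros [].
  - destruct y.
Qed.

Lemma empty_one (Phi Psi : PClass) : JoinDoctrine Phi -> JoinDoctrine Psi ->
  SoundDual Phi Psi -> Phi Empty_set eq \/ Psi Empty_set eq.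
Proof.
  intros JF JS [M G]. apply NNPP; intro Hn. apply not_or_and in Hn; destruct Hn as [N1 N2].
  assert (HE : ~ Nonempty Empty_set) by (intros [[] _]).
  assert (Hg := G Empty_set eq (eq_poset _) (fun _ => True) ltac:(intros x; destruct x)
    (fun A => exists x, A x)).
  destruct Hg as [[] _].
  - intros A [_ HA]. exfalso; apply N2. apply (jd_empty Psi JS _ _ _ _ HA).
    intros [[[] _] _]. apply eq_poset. auto.
  - intros S HS HP. destruct (classic (Nonempty {A | S A})) as [[[A HA] _]|He].
    + destruct (HS A HA) as [_ [[] _]].
    + exfalso; apply N1. apply (jd_empty Phi JF _ _ _ _ HP He). apply eq_poset. auto.
Qed.

Lemma exact_list {Z : Type} (l : list Z) : forall (A : Z -> Prop),
  (forall x, A x -> In x l) -> exists l', forall x, A x <-> In x l'.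
Proof.
  induction l as [|a l IH]; intros A H.
  - exists []; intro x; split; [apply H| intros []].
  - destruct (IH (fun x => A x /\ x <> a)) as [l' Hl'].
    { intros x [Ax Hxa]. destruct (H x Ax) as [->|Hx]; [congruence|auto]. }
    destruct (classic (A a)) as [Aa|Na].
    + exists (a :: l'); intro x; split.
      * intro Ax. destruct (classic (x = a)) as [->|Hxa]; [left; auto|right; apply Hl'; auto].
      * intros [<-|Hx]; auto. apply Hl' in Hx; tauto.
    + exists l'; intro x; split.
      * intro Ax. apply Hl'. split; auto. intros ->; auto.
      * intro Hx; apply Hl' in Hx; tauto.
Qed.

Lemma psi_disc_fin (Phi Psi : PClass) : JoinDoctrine Phi -> JoinDoctrine Psi ->
  MeetsCommuteJoins Phi Psi -> Phi nat Peano.le ->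
  forall Z (A : Z -> Prop), Psi {x | A x} (sub_le eq A) -> exists l, forall x, A x <-> In x l.
Proof.
  intros JF JS M Hnat Z A HA.
  assert (Hcov : exists l, forall x, A x -> In x l).
  { apply NNPP; intro Hn.
    assert (Hp : forall l, exists x, A x /\ ~ In x l).
    { intro l. apply NNPP; intro H'. apply Hn. exists l. intros x Ax.
      apply NNPP; intro Hx. apply H'; eauto. }
    pose (pick := fun l => proj1_sig (constructive_indefinite_description _ (Hp l))).
    assert (Hpick : forall l, A (pick l) /\ ~ In (pick l) l).
    { intro l. exact (proj2_sig (constructive_indefinite_description _ (Hp l))). }
    pose (seqL := nat_rect (fun _ => list Z) [] (fun _ l => pick l :: l)).
    pose (a := fun n => pick (seqL n)).
    assert (Hin : forall n m, m < n -> In (a m) (seqL n)).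
    { induction n as [|n IH]; intros m Hm; [lia|].
      simpl. destruct (Nat.eq_dec m n) as [->|Hne]; [left; reflexivity|right; apply IH; lia]. }
    assert (Hinj : forall m n, m < n -> a n <> a m).
    { intros m n Hmn E. apply (proj2 (Hpick (seqL n))). fold (a n). rewrite E. apply Hin; auto. }
    set (F := fun (x : Z) (n : nat) => dec (forall k, n <= k -> x <> a k)).
    destruct (M Z nat eq Peano.le (eq_poset Z) nat_poset (fun _ => True) A) with (F := F)
      as [M1 _].
    - split. intros x y _ _; auto. apply jd_full; auto.
    - split. intros x y -> Hy; auto. exact HA.
    - intros x x' y y' -> Hy H. unfold F in *. apply (proj2 (dec_spec _)). apply (proj1 (dec_spec _)) in H.
      intros k Hk; apply H; lia.
    - destruct M1 as [n [_ Hn']].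
      + intros x Ax. destruct (classic (exists k, x = a k)) as [[k ->]|Hk].
        * exists (S k); split; auto. apply (proj2 (dec_spec _)). intros k' Hk' E. apply (Hinj k k'); [lia|symmetry; exact E].
        * exists 0; split; auto. apply (proj2 (dec_spec _)). intros k _ E; apply Hk; eauto.
      + specialize (Hn' (a n) (proj1 (Hpick _))). apply (proj1 (dec_spec _)) in Hn'.
        apply (Hn' n); auto. }
  destruct Hcov as [l Hl]. apply (exact_list l A Hl).
Qed.

Lemma union_step (Phi : PClass) : JoinDoctrine Phi ->
  forall D (le : D -> D -> Prop) (S : (D -> Prop) -> Prop) (G : (D -> Prop) -> D -> Prop)
    (V : D -> Prop),
  IsPoset D le -> Phi {A | S A} (incl_le S) ->
  (forall A B : D -> Prop, (forall x, A x -> B x) -> forall x, G A x -> G B x) ->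
  (forall A, S A -> (exists z, A z) -> Phi {x | G A x} (sub_le le (G A))) ->
  (forall x, V x <-> exists A, S A /\ (exists z, A z) /\ G A x) ->
  (exists A, S A /\ exists z, A z) ->
  Phi {x | V x} (sub_le le V).
Proof.
  intros J D le S G V HD HS HG HM HV [A0 [HA0 [z0 Hz0]]].
  pose proof J as (J0 & _ & J2 & J3 & J4).
  set (NE := fun s : {A | S A} => exists z, proj1_sig s z).
  assert (HS' : Phi {s | NE s} (sub_le (incl_le S) NE)).
  { apply J4; [apply incl_poset| |exact HS].
    intros [A HA]. destruct (classic (exists z, A z)) as [Hn|Hn].
    - exists (exist _ A HA); split; auto. unfold incl_le; simpl; auto.
    - exists (exist _ A0 HA0); split. exists z0; auto.
      unfold incl_le; simpl. intros x Ax; exfalso; eauto. }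
  set (T := {x | V x}).
  set (S2 := fun B : T -> Prop => exists A, S A /\ (exists z, A z) /\
                 forall t, B t <-> G A (proj1_sig t)).
  assert (HS2 : forall s : {s | NE s}, S2 (fun t : T => G (proj1_sig (proj1_sig s)) (proj1_sig t))).
  { intros [[A HA] HN]. exists A; simpl; split; auto; split; auto. tauto. }
  apply (J2 T (sub_le le V) (sub_poset le V HD) S2).
  - intros B [A [HA [HN HB]]].
    assert (HGV : forall x, G A x -> V x) by (intros x Hx; apply HV; eauto).
    apply (jd_map Phi J {x | G A x} _ (sub_le le (G A)) _
      (fun x => exist (fun t => B t) (exist V (proj1_sig x) (HGV _ (proj2_sig x)))
                  (proj2 (HB (exist V (proj1_sig x) (HGV _ (proj2_sig x)))) (proj2_sig x)))).
    + apply sub_poset, sub_poset; auto.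
    + intros x y Hxy; exact Hxy.
    + intros [[x Vx] Bx]. pose proof (proj1 (HB _) Bx) as Bx'. exists (exist _ x Bx').
      unfold sub_le; simpl. apply HD.
    + apply HM; auto.
  - apply (jd_map Phi J {s | NE s} _ (sub_le (incl_le S) NE) (incl_le S2) (fun s => exist S2 _ (HS2 s))).
    + apply incl_poset.
    + intros [[A HA] HNA] [[B HB] HNB] Hab. unfold sub_le, incl_le in *; simpl in *.
      intros t; apply HG; auto.
    + intros [B [A [HA [HN HB]]]]. exists (exist _ (exist _ A HA) HN).
      unfold incl_le; simpl. intros t Ht; apply HB; auto.
    + exact HS'.
  - intros [x Vx]. destruct (proj1 (HV x) Vx) as [A [HA [HN HGx]]].
    exists (fun t : T => G A (proj1_sig t)). split.
    + exists A; split; auto; split; auto; tauto.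
    + exact HGx.
Qed.

Inductive cl {D : Type} (ub : D -> D -> D) (A : D -> Prop) : D -> Prop :=
| cl_base : forall x, A x -> cl ub A x
| cl_ub : forall x y, cl ub A x -> cl ub A y -> cl ub A (ub x y).

Lemma cl_mono {D : Type} (ub : D -> D -> D) (A B : D -> Prop) :
  (forall x, A x -> B x) -> forall x, cl ub A x -> cl ub B x.
Proof. intros H x Hx; induction Hx; [apply cl_base; auto| apply cl_ub; auto]. Qed.

Fixpoint lev {D : Type} (ub : D -> D -> D) (l : list D) (n : nat) : list D :=
  match n with
  | 0 => l
  | S n => lev ub l n ++ flat_map (fun x => map (ub x) (lev ub l n)) (lev ub l n)
  end.

Fixpoint bnd {D : Type} (ub : D -> D -> D) (d : D) (t : list D) : D :=
  match t with [] => d | x :: t => ub x (bnd ub d t) end.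

Lemma bnd_ge {D : Type} (le : D -> D -> Prop) (ub : D -> D -> D) :
  IsPoset D le -> (forall x y, le x (ub x y) /\ le y (ub x y)) ->
  forall d t, le d (bnd ub d t) /\ forall y, In y t -> le y (bnd ub d t).
Proof.
  intros (r & tr & a) Hub d t. induction t as [|x t [IH1 IH2]]; simpl.
  - split; auto. intros y [].
  - split. eapply tr; [apply IH1|apply Hub].
    intros y [<-|Hy]. apply Hub. eapply tr; [apply IH2; auto|apply Hub].
Qed.

Lemma bnd_cl {D : Type} (ub : D -> D -> D) A d t :
  cl ub A d -> (forall y, In y t -> cl ub A y) -> cl ub A (bnd ub d t).
Proof.
  intros Hd Ht. induction t as [|x t IH]; simpl; auto.
  apply cl_ub. apply Ht; left; auto. apply IH; intros; apply Ht; right; auto.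
Qed.

Lemma lev_cl {D : Type} (ub : D -> D -> D) l : forall n y, In y (lev ub l n) ->
  cl ub (fun x => In x l) y.
Proof.
  induction n as [|n IH]; simpl; intros y Hy.
  - apply cl_base; auto.
  - apply in_app_or in Hy; destruct Hy as [Hy|Hy]; auto.
    apply in_flat_map in Hy. destruct Hy as [x [Hx Hy]]. apply in_map_iff in Hy.
    destruct Hy as [z [<- Hz]]. apply cl_ub; auto.
Qed.

Lemma lev_mono {D : Type} (ub : D -> D -> D) l : forall n m, n <= m ->
  forall y, In y (lev ub l n) -> In y (lev ub l m).
Proof.
  intros n m H; induction H; auto. intros y Hy; simpl. apply in_or_app; left; auto.
Qed.

Lemma cl_lev {D : Type} (ub : D -> D -> D) l : forall y,
  cl ub (fun x => In x l) y -> exists n, In y (lev ub l n).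
Proof.
  intros y H; induction H as [x Hx| x y Hx [n IHx] Hy [m IHy]].
  - exists 0; auto.
  - exists (S (Nat.max n m)). simpl. apply in_or_app; right. apply in_flat_map.
    exists x; split. apply (lev_mono ub l n); auto; lia.
    apply in_map. apply (lev_mono ub l m); auto; lia.
Qed.

Lemma cl_fin_phi (Phi : PClass) : JoinDoctrine Phi -> Phi nat Peano.le ->
  forall D (le : D -> D -> Prop) (ub : D -> D -> D), IsPoset D le ->
  (forall x y, le x (ub x y) /\ le y (ub x y)) ->
  forall l a0, In a0 l ->
  Phi {x | cl ub (fun x => In x l) x} (sub_le le (cl ub (fun x => In x l))).
Proof.
  intros J Hnat D le ub HD Hub l a0 Ha0.
  pose proof HD as (r & tr & an).
  pose (c := nat_rect (fun _ => D) (bnd ub a0 l) (fun n cn => bnd ub cn (lev ub l (S n)))).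
  assert (c_cl : forall n, cl ub (fun x => In x l) (c n)).
  { induction n as [|n IH]; simpl.
    - apply bnd_cl. apply cl_base; auto. intros; apply cl_base; auto.
    - apply bnd_cl; auto. intros y Hy; exact (lev_cl ub l (S n) y Hy). }
  assert (c_ge : forall n y, In y (lev ub l n) -> le y (c n)).
  { destruct n as [|n]; intros y Hy.
    - exact (proj2 (bnd_ge le ub HD Hub a0 l) y Hy).
    - exact (proj2 (bnd_ge le ub HD Hub (c n) (lev ub l (S n))) y Hy). }
  assert (c_mono : forall n m, n <= m -> le (c n) (c m)).
  { intros n m H; induction H. apply r. eapply tr; [exact IHle|].
    exact (proj1 (bnd_ge le ub HD Hub (c m) (lev ub l (S m)))). }
  apply (jd_map Phi J nat _ Peano.le _ (fun n => exist _ (c n) (c_cl n)));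
    [apply sub_poset; exact HD| | |exact Hnat].
  - intros n m H; unfold sub_le; simpl; auto.
  - intros [x Hx]. destruct (cl_lev ub l x Hx) as [n Hn]. exists n.
    unfold sub_le; simpl; auto.
Qed.

Lemma dir_phi (Phi Psi : PClass) : JoinDoctrine Phi -> JoinDoctrine Psi ->
  SoundDual Phi Psi -> Phi nat Peano.le ->
  (forall T le, Phi T le -> ~ Nonempty T \/ Directed T le) ->
  forall D (le : D -> D -> Prop), IsPoset D le -> Directed D le -> Phi D le.
Proof.
  intros JF JS [M G] Hnat HB1 D le HD [Hne Hd].
  pose (ub := fun x y => proj1_sig (constructive_indefinite_description _ (Hd x y))).
  assert (Hub : forall x y, le x (ub x y) /\ le y (ub x y)).
  { intros x y. exact (proj2_sig (constructive_indefinite_description _ (Hd x y))). }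
  assert (HG := G D eq (eq_poset D) (fun _ => True) ltac:(intros x y _ _; auto)
    (fun A => (forall x, ~ A x) \/ Phi {x | cl ub A x} (sub_le le (cl ub A)))).
  destruct HG as [Hc|Hc].
  - intros A [_ HA]. destruct (psi_disc_fin Phi Psi JF JS M Hnat D A HA) as [[|a0 l] Hl].
    + left. intros x Ax; apply Hl in Ax; destruct Ax.
    + right. assert (E : A = fun x => In x (a0 :: l)) by (apply pred_ext; auto).
      subst A. apply (cl_fin_phi Phi JF Hnat D le ub HD Hub (a0 :: l) a0). left; auto.
  - intros S HS HP. destruct (classic (exists x, bigunion S x)) as [[x0 [A0 [HA0 Hx0]]]|Hn].
    + right. destruct (HB1 _ _ HP) as [He|[_ HSd]].
      { exfalso; apply He. exists (exist _ A0 HA0); auto. }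
      apply (union_step Phi JF D le S (cl ub) (cl ub (bigunion S))); auto.
      * apply cl_mono.
      * intros A HA [z Hz]. destruct (HS A HA) as [_ [Hc|Hc]]; auto.
        exfalso; eapply Hc; eauto.
      * intros x; split.
        -- intro Hx. induction Hx as [x [A [HA Ax]]| x y Hx [A [HA [HnA HxA]]] Hy [B [HB [HnB HyB]]]].
           ++ exists A; split; auto; split; eauto. apply cl_base; auto.
           ++ destruct (HSd (exist _ A HA) (exist _ B HB)) as [[C HC] [HAC HBC]].
              unfold incl_le in *; simpl in *. exists C; split; auto. split.
              { destruct HnA as [z Hz]; exists z; auto. }
              apply cl_ub; [eapply cl_mono; [exact HAC|exact HxA]|eapply cl_mono; [exact HBC|exact HyB]].
        -- intros [A [HA [_ Hx]]]. eapply cl_mono; [|exact Hx].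
           intros z Hz; exists A; auto.
      * exists A0; split; eauto.
    + left. intros x Hx; apply Hn; eauto.
  - destruct Hne as [x _]. exfalso; apply (Hc x); auto.
  - apply (jd_unfull Phi JF D le (cl ub (fun _ => True))); auto.
    intro x; apply cl_base; auto.
Qed.

Lemma psi_dir_of_two (Phi Psi : PClass) : JoinDoctrine Phi -> JoinDoctrine Psi ->
  MeetsCommuteJoins Phi Psi -> Phi bool eq ->
  forall Q (le : Q -> Q -> Prop), Psi Q le -> ~ Nonempty Q \/ Directed Q le.
Proof.
  intros JF JS M H2 Q le HQ. pose proof (jd_pos _ JS _ _ HQ) as (r & tr & an).
  destruct (classic (Nonempty Q)) as [Hn|Hn]; [right|left; auto].
  split; auto. intros x1 x2. apply NNPP; intro H.
  destruct (mc_full Phi Psi JF JS M Q bool le eq HQ H2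
    (fun x b => dec (~ if b then le x1 x else le x2 x))) as [b Hb].
  - intros x x' y y' Hx <- Hf. apply (proj1 (dec_spec _)) in Hf. apply (proj2 (dec_spec _)).
    intro Hc; apply Hf. destruct y; eauto.
  - intro x. destruct (classic (le x1 x)) as [H1|H1].
    + exists false. apply (proj2 (dec_spec _)). intro H2'; apply H; eauto.
    + exists true. apply (proj2 (dec_spec _)). auto.
  - destruct b; [specialize (Hb x1)|specialize (Hb x2)]; apply (proj1 (dec_spec _)) in Hb; auto.
Qed.

Lemma phi_all_ne (Phi Psi : PClass) : JoinDoctrine Phi -> JoinDoctrine Psi ->
  SoundDual Phi Psi ->
  (forall Z (A : Z -> Prop), Psi {x | A x} (sub_le eq A) -> forall x y, A x -> A y -> x = y) ->
  forall P (le : P -> P -> Prop), IsPoset P le -> Nonempty P -> Phi P le.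
Proof.
  intros JF JS [M G] Hsub P le HP Hne.
  assert (HG := G P eq (eq_poset P) (fun _ => True) ltac:(intros x y _ _; auto)
    (fun A => (forall x, ~ A x) \/ Phi {x | A x} (sub_le le A))).
  destruct HG as [Hc|Hc].
  - intros A [_ HA]. destruct (classic (exists x, A x)) as [[x Ax]|Hn].
    + right. apply jd_gr; auto. apply sub_poset; auto. exists (exist _ x Ax).
      intros [y Ay]. unfold sub_le; simpl. rewrite (Hsub P A HA y x Ay Ax). apply HP.
    + left. intros x Ax; eauto.
  - intros S HS HPh. destruct (classic (exists x, bigunion S x)) as [[x0 [A0 [HA0 Hx0]]]|Hn].
    + right. apply (union_step Phi JF P le S (fun A => A) (bigunion S)); auto.
      * intros A HA [z Hz]. destruct (HS A HA) as [_ [Hc|Hc]]; auto.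
        exfalso; eapply Hc; eauto.
      * intros x; split.
        -- intros [A [HA Ax]]. exists A; split; auto; split; eauto.
        -- intros [A [HA [_ Hx]]]. exists A; auto.
      * exists A0; split; eauto.
    + left. intros x Hx; apply Hn; eauto.
  - destruct Hne as [x _]. exfalso; apply (Hc x); auto.
  - apply (jd_unfull Phi JF P le (fun _ => True)); auto.
Qed.

Lemma psi_gr (Phi Psi : PClass) : JoinDoctrine Phi -> JoinDoctrine Psi ->
  MeetsCommuteJoins Phi Psi ->
  (forall P (le : P -> P -> Prop), IsPoset P le -> Nonempty P -> Phi P le) ->
  forall Q (le : Q -> Q -> Prop), Psi Q le -> Nonempty Q -> HasGreatest Q le.
Proof.
  intros JF JS M Hall Q le HQ Hn. pose proof (jd_pos _ JS _ _ HQ) as (r & tr & an).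
  destruct (mc_full Phi Psi JF JS M Q Q le le HQ (Hall Q le (jd_pos _ JS _ _ HQ) Hn)
    (fun x y => dec (le x y))) as [g Hg].
  - intros x x' y y' H1 H2 H. apply (proj1 (dec_spec _)) in H. apply (proj2 (dec_spec _)). eauto.
  - intro x; exists x; apply (proj2 (dec_spec _)); auto.
  - exists g; intro x; apply (proj1 (dec_spec _)); auto.
Qed.

Lemma phi_ed (Phi Psi : PClass) : JoinDoctrine Phi -> JoinDoctrine Psi ->
  SoundDual Phi Psi -> ~ Phi bool eq ->
  forall P (le : P -> P -> Prop), Phi P le -> ~ Nonempty P \/ Directed P le.
Proof.
  intros JF JS [M G] N2 P le HP. pose proof (jd_pos _ JF _ _ HP) as (r & tr & an).
  destruct (classic (Nonempty P)) as [Hn|Hn]; [right|left; auto].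
  split; auto. intros x1 x2. apply NNPP; intro H.
  assert (NP : ~ Psi bool eq).
  { intro HB. destruct (mc_full Phi Psi JF JS M bool P eq le HB HP
      (fun b y => dec (if b then le x1 y else le x2 y))) as [y Hy].
    - intros b b' y y' E Hy Hf; subst b'. apply (proj1 (dec_spec _)) in Hf. apply (proj2 (dec_spec _)).
      destruct b; eauto.
    - intros []; [exists x1|exists x2]; apply (proj2 (dec_spec _)); auto.
    - apply H. exists y. split; [specialize (Hy true)|specialize (Hy false)];
      apply (proj1 (dec_spec _)) in Hy; auto. }
  assert (HG := G bool eq (eq_poset bool) (fun _ => True) ltac:(intros x y _ _; auto)
    (fun A => ~ (A true /\ A false))).
  destruct HG; auto.
  - intros A [_ HA] [At Af]. apply NP.
    apply (jd_map Psi JS {b | A b} bool (sub_le eq A) eq (@proj1_sig _ _)); auto.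
    + apply eq_poset.
    + intros x y Hxy; exact Hxy.
    + intros []; [exists (exist _ true At)|exists (exist _ false Af)]; auto.
  - intros S HS HPS [[A1 [HA1 A1t]] [A2 [HA2 A2f]]]. apply N2.
    set (NE := fun s : {A | S A} => proj1_sig s true \/ proj1_sig s false).
    assert (HS' : Phi {s | NE s} (sub_le (incl_le S) NE)).
    { pose proof JF as (_ & _ & _ & _ & J4). apply J4; [apply incl_poset| |exact HPS].
      intros [A HA]. destruct (classic (A true \/ A false)) as [Hn'|Hn'].
      - exists (exist _ A HA); split; auto. unfold incl_le; simpl; auto.
      - exists (exist _ A1 HA1); split. left; auto.
        unfold incl_le; simpl. intros [|] Ab; exfalso; auto. }
    apply (jd_map Phi JF {s | NE s} bool (sub_le (incl_le S) NE) eq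
       (fun s => dec (proj1_sig (proj1_sig s) true))); auto.
    + apply eq_poset.
    + intros [[A HA] HNA] [[B HB] HNB] Hab. unfold sub_le, incl_le in *; simpl in *.
      destruct (HS A HA) as [_ CA]. destruct (HS B HB) as [_ CB].
      unfold dec. destruct (excluded_middle_informative (A true)) as [a|a];
      destruct (excluded_middle_informative (B true)) as [b|b]; auto.
      * exfalso; auto.
      * exfalso. destruct HNA as [a'|a']; [contradiction|apply CB; split; auto].
    + intros []; [exists (exist _ (exist _ A1 HA1) (or_introl A1t))
                 |exists (exist _ (exist _ A2 HA2) (or_intror A2f))]; simpl;
      unfold dec.
      * destruct (excluded_middle_informative (A1 true)); auto. contradiction.
      * destruct (excluded_middle_informative (A2 true)); auto.
        exfalso; apply (proj2 (HS A2 HA2)); auto.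
Qed.

Lemma psi_fc (Phi Psi : PClass) : JoinDoctrine Phi -> JoinDoctrine Psi ->
  MeetsCommuteJoins Phi Psi ->
  (forall D (le : D -> D -> Prop), IsPoset D le -> Directed D le -> Phi D le) ->
  forall Q (le : Q -> Q -> Prop), Psi Q le -> FiniteCofinality Q le.
Proof.
  intros JF JS M Hdir Q le HQ. pose proof (jd_pos _ JS _ _ HQ) as HP.
  pose proof HP as (r & tr & an).
  set (SF := fun A : Q -> Prop => exists l, A = dl le l).
  assert (HY : Phi {A | SF A} (incl_le SF)).
  { apply Hdir. apply incl_poset. split.
    - exists (exist SF (dl le []) (ex_intro _ [] eq_refl)); auto.
    - intros [A [l1 ->]] [B [l2 ->]].
      exists (exist SF (dl le (l1 ++ l2)) (ex_intro _ _ eq_refl)).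
      unfold incl_le; simpl; split; intros x [y [Hy Hxy]]; exists y; split; auto;
      apply in_or_app; auto. }
  destruct (mc_full Phi Psi JF JS M Q _ le _ HQ HY (fun x s => dec (proj1_sig s x)))
    as [[A [l ->]] Hl].
  - intros x x' [A [l1 ->]] [B [l2 ->]] Hx Hs H. apply (proj1 (dec_spec _)) in H.
    apply (proj2 (dec_spec _)). unfold incl_le in Hs; simpl in *.
    apply (dl_lower le l2 HP x' x Hx). apply Hs; auto.
  - intro x. exists (exist SF (dl le [x]) (ex_intro _ _ eq_refl)).
    apply (proj2 (dec_spec _)). simpl. exists x; split; simpl; auto.
  - exists l. intro x. specialize (Hl x). apply (proj1 (dec_spec _)) in Hl. exact Hl.
Qed.

Lemma psi_bool (Phi Psi : PClass) : JoinDoctrine Phi -> JoinDoctrine Psi ->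
  SoundDual Phi Psi ->
  (forall T le, Phi T le -> ~ Nonempty T \/ Directed T le) -> Psi bool eq.
Proof.
  intros JF JS [M G] HB1. apply NNPP; intro NP.
  assert (HG := G bool eq (eq_poset bool) (fun _ => True) ltac:(intros x y _ _; auto)
    (fun A => ~ (A true /\ A false))).
  apply HG; auto.
  - intros A [_ HA] [At Af]. apply NP.
    apply (jd_map Psi JS {b | A b} bool (sub_le eq A) eq (@proj1_sig _ _)); auto.
    + apply eq_poset.
    + intros x y Hxy; exact Hxy.
    + intros []; [exists (exist _ true At)|exists (exist _ false Af)]; auto.
  - intros S HS HPS [[A1 [HA1 A1t]] [A2 [HA2 A2f]]].
    destruct (HB1 _ _ HPS) as [He|[_ Hd]].
    + apply He; exists (exist _ A1 HA1); auto.
    + destruct (Hd (exist _ A1 HA1) (exist _ A2 HA2)) as [[A3 HA3] [H1 H2]].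
      unfold incl_le in *; simpl in *. apply (proj2 (HS A3 HA3)); auto.
Qed.

Lemma fin_psi (Psi : PClass) : JoinDoctrine Psi -> Psi bool eq ->
  forall T (le : T -> T -> Prop), IsPoset T le ->
  forall l, l <> [] -> forall (P : T -> Prop),
  (forall y, In y l -> P y) -> (forall x, P x -> exists y, In y l /\ le x y) ->
  Psi {x | P x} (sub_le le P).
Proof.
  intros JS HB T le HT l. induction l as [|a l' IH]; intros Hl P Hin Hcov; [congruence|].
  pose proof HT as (r & tr & an).
  assert (Pa : P a) by (apply Hin; left; auto).
  destruct l' as [|b l''].
  - apply jd_gr; auto. apply sub_poset; auto. exists (exist _ a Pa).
    intros [x Px]. unfold sub_le; simpl. destruct (Hcov x Px) as [y [[<-|[]] Hxy]]; auto.
  - pose proof JS as (_ & _ & J2 & _ & _).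
    set (T' := {x | P x}).
    set (A' := fun t : T' => le (proj1_sig t) a).
    set (B' := fun t : T' => exists y, In y (b :: l'') /\ le (proj1_sig t) y).
    set (S := fun C : T' -> Prop => C = A' \/ C = B').
    apply (J2 T' (sub_le le P) (sub_poset le P HT) S).
    + intros C [->| ->].
      * apply jd_gr; auto. apply sub_poset, sub_poset; auto.
        assert (Ha : A' (exist _ a Pa)) by (unfold A'; simpl; auto).
        exists (exist _ _ Ha). intros [[x Px] Hx]. unfold sub_le; simpl. exact Hx.
      * assert (HI := IH ltac:(congruence) (fun x => P x /\ exists y, In y (b :: l'') /\ le x y)).
        assert (HJ : Psi {x | P x /\ exists y, In y (b :: l'') /\ le x y}
                       (sub_le le (fun x => P x /\ exists y, In y (b :: l'') /\ le x y))).
        { apply HI.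
          - intros y Hy. split. apply Hin; right; auto. exists y; auto.
          - intros x [_ Hx]. exact Hx. }
        apply (jd_map Psi JS {x | P x /\ exists y, In y (b :: l'') /\ le x y} {t : T' | B' t}
          (sub_le le (fun x => P x /\ exists y, In y (b :: l'') /\ le x y)) (sub_le (sub_le le P) B')
          (fun x => exist B' (exist P (proj1_sig x) (proj1 (proj2_sig x)))
                      (proj2 (proj2_sig x) : B' (exist P (proj1_sig x) (proj1 (proj2_sig x)))))).
        -- apply sub_poset, sub_poset; auto.
        -- intros x y Hxy; exact Hxy.
        -- intros [[x Px] Bx]. exists (exist _ x (conj Px Bx)). unfold sub_le; simpl; auto.
        -- exact HJ.
    + apply (jd_map Psi JS bool {C | S C} eq (incl_le S)
        (fun b : bool => if b then exist S A' (or_introl eq_refl) else exist S B' (or_intror eq_refl))).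
      * apply incl_poset.
      * intros x y <-. unfold incl_le; auto.
      * intros [C [->| ->]]; [exists true|exists false]; unfold incl_le; simpl; auto.
      * exact HB.
    + intros [x Px]. destruct (Hcov x Px) as [y [[<-|Hy] Hxy]].
      * exists A'; split; [left; auto|exact Hxy].
      * exists B'; split; [right; auto|exists y; auto].
Qed.

Lemma empty_ne : ~ Nonempty Empty_set.
Proof. intros [[] _]. Qed.

Theorem theorem3p9 : forall Phi Psi : PClass,
  (JoinDoctrine Phi /\ JoinDoctrine Psi /\ SoundDual Phi Psi /\ Phi nat le) <->
  ((SameClass Phi C_directed /\ SameClass Psi C_fincof) \/
   (SameClass Phi C_empty_or_directed /\ SameClass Psi C_nonempty_fincof) \/
   (SameClass Phi C_nonempty /\ SameClass Psi C_empty_or_greatest) \/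
   (SameClass Phi C_all /\ SameClass Psi C_greatest)).
Proof.
  intros Phi Psi; split.
  - intros (JF & JS & SD & Hnat).
    pose proof SD as [M G].
    assert (NB : Phi Empty_set eq -> Psi Empty_set eq -> False)
      by apply (empty_not_both Phi Psi JF JS M).
    assert (OE := empty_one Phi Psi JF JS SD).
    assert (TrF : forall T le, IsPoset T le -> ~ Nonempty T -> Phi Empty_set eq -> Phi T le).
    { intros T le HT Hn H. apply (jd_empty Phi JF _ _ _ _ H empty_ne HT Hn). }
    assert (TrS : forall T le, IsPoset T le -> ~ Nonempty T -> Psi Empty_set eq -> Psi T le).
    { intros T le HT Hn H. apply (jd_empty Psi JS _ _ _ _ H empty_ne HT Hn). }
    assert (ToF : forall T le, Phi T le -> ~ Nonempty T -> Phi Empty_set eq).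
    { intros T le H Hn. apply (jd_empty Phi JF _ _ _ _ H Hn (eq_poset _) empty_ne). }
    assert (ToS : forall T le, Psi T le -> ~ Nonempty T -> Psi Empty_set eq).
    { intros T le H Hn. apply (jd_empty Psi JS _ _ _ _ H Hn (eq_poset _) empty_ne). }
    destruct (classic (Phi bool eq)) as [H2|N2].
    +
      assert (A1 := psi_dir_of_two Phi Psi JF JS M H2).
      assert (Hsub : forall Z (A : Z -> Prop), Psi {x | A x} (sub_le eq A) ->
                forall x y, A x -> A y -> x = y).
      { intros Z A HA x y Ax Ay. destruct (A1 _ _ HA) as [He|[_ Hd]].
        - exfalso; apply He; exists (exist _ x Ax); auto.
        - destruct (Hd (exist _ x Ax) (exist _ y Ay)) as [[z Hz] [E1 E2]].
          unfold sub_le in *; simpl in *. congruence. }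
      assert (A2 := phi_all_ne Phi Psi JF JS SD Hsub).
      assert (A3 := psi_gr Phi Psi JF JS M A2).
      destruct (classic (Phi Empty_set eq)) as [HE|NE].
      * right; right; right. split; intros T le; split.
        -- apply (jd_pos _ JF).
        -- intro HT. destruct (classic (Nonempty T)) as [Hn|Hn]; auto.
        -- intro H. split. apply (jd_pos _ JS _ _ H).
           destruct (classic (Nonempty T)) as [Hn|Hn]; auto.
           exfalso; apply NB; auto. apply (ToS T le H Hn).
        -- intros [HT Hg]. apply jd_gr; auto.
      * right; right; left. split; intros T le; split.
        -- intro H. split. apply (jd_pos _ JF _ _ H).
           apply NNPP; intro Hn. apply NE, (ToF T le H Hn).
        -- intros [HT Hn]; auto.
        -- intro H. split. apply (jd_pos _ JS _ _ H).
           destruct (classic (Nonempty T)) as [Hn|Hn]; auto.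
        -- intros [HT [Hn|Hg]].
           ++ apply TrS; auto. destruct OE; [contradiction|auto].
           ++ apply jd_gr; auto.
    +
      assert (B1 := phi_ed Phi Psi JF JS SD N2).
      assert (B2 := dir_phi Phi Psi JF JS SD Hnat B1).
      assert (B3 := psi_fc Phi Psi JF JS M B2).
      assert (HB := psi_bool Phi Psi JF JS SD B1).
      assert (B4 : forall T le, IsPoset T le -> Nonempty T -> FiniteCofinality T le -> Psi T le).
      { intros T le HT [x0 _] [l Hl].
        apply (jd_unfull Psi JS T le (fun _ => True)); auto.
        apply (fin_psi Psi JS HB T le HT l).
        - intro E; subst l. destruct (Hl x0) as [y [[] _]].
        - auto.
        - intros x _; auto. }
      destruct (classic (Phi Empty_set eq)) as [HE|NE].
      * right; left. split; intros T le; split.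
        -- intro H. split. apply (jd_pos _ JF _ _ H). auto.
        -- intros [HT [Hn|Hd]]; auto.
        -- intro H. split. apply (jd_pos _ JS _ _ H). split; auto.
           apply NNPP; intro Hn. apply NB; auto. apply (ToS T le H Hn).
        -- intros [HT [Hn Hf]]; auto.
      * left. split; intros T le; split.
        -- intro H. split. apply (jd_pos _ JF _ _ H).
           destruct (B1 T le H) as [Hn|Hd]; auto.
           exfalso; apply NE, (ToF T le H Hn).
        -- intros [HT Hd]; auto.
        -- intro H. split. apply (jd_pos _ JS _ _ H). auto.
        -- intros [HT Hf]. destruct (classic (Nonempty T)) as [Hn|Hn]; auto.
           apply TrS; auto. destruct OE; [contradiction|auto].
  - intros [[H1 H2]|[[H1 H2]|[[H1 H2]|[H1 H2]]]];
      apply sameclass_eq in H1; apply sameclass_eq in H2; subst Phi Psi.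
    + split; [apply jd_directed|split; [apply jd_fincof|split; [apply sd_i|]]].
      split; [apply nat_poset|apply nat_dir].
    + split; [apply jd_ed|split; [apply jd_nfc|split; [apply sd_ii|]]].
      split; [apply nat_poset|right; apply nat_dir].
    + split; [apply jd_ne|split; [apply jd_eg|split; [apply sd_iii|]]].
      split; [apply nat_poset|exists 0; auto].
    + split; [apply jd_all|split; [apply jd_greatest_class|split; [apply sd_iv|]]].
      apply nat_poset.
Qed.
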